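(* Let $n$ be a positive integer and let $R_3(n)$ denote the number of reduced $3\times n$ Latin rectangles. Define \[ g(t_{00},t_{10},t_{01},t_{11}) = (t_{00}+t_{10})(t_{00}+t_{01}) - t_{00}. \] Then \begin{eqnarray*} R_3(n)&=& \sum_{s_{00}+s_{10}+s_{01}+s_{11}=n} (-1)^{s_{10}+s_{01}+2s_{11}} \frac{n!}{s_{00}!\,s_{10}!\,s_{01}!\,s_{11}!} \\&&\cdot\; g(s_{00}-1,s_{10},s_{01},s_{11}+1)^{s_{00}}\, g(s_{00},s_{10}-1,s_{01},s_{11}+1)^{s_{10}} \\&&\cdot\; g(s_{00},s_{10},s_{01}-1,s_{11}+1)^{s_{01}}\, g(s_{00},s_{10},s_{01},s_{11})^{s_{11}}, \end{eqnarray*} where the sum runs over all quadruples of nonnegative integers $(s_{00},s_{10},s_{01},s_{11})$ with sum $n$.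
   Context: A $k\times n$ Latin rectangle is a $k\times n$ matrix with entries in $\{1,\dots,n\}$ such that no row and no column contains a repeated entry (so each row is a permutation of $\{1,\dots,n\}$). It is reduced if its first row is $1,2,\dots,n$ in order. The convention $x^0=1$ for every integer $x$ (including $0^0=1$) is used. *)

(* Defs.v *)
From mathcomp Require Import all_boot all_order all_algebra.
Set Implicit Arguments. Unset Strict Implicit. Unset Printing Implicit Defensive.
Import GRing.Theory Num.Theory.
Local Open Scope ring_scope.

(* A k x n Latin rectangle on symbols {0,...,n-1} (i.e. {1..n} shifted by one):
   entries L (i,j), rows and columns without repetition. *)
Definition latin_rect (k n : nat) (L : {ffun 'I_k * 'I_n -> 'I_n}) : bool :=
  [forall i, forall j1, forall j2, (L (i, j1) == L (i, j2)) ==> (j1 == j2)] &&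
  [forall j, forall i1, forall i2, (L (i1, j) == L (i2, j)) ==> (i1 == i2)].

Definition reduced_latin_rect (k n : nat) (L : {ffun 'I_k * 'I_n -> 'I_n}) : bool :=
  latin_rect L && [forall i : 'I_k, forall j : 'I_n,
                     (val i == 0%N) ==> (val (L (i, j)) == val j)].

Definition R (k n : nat) : nat := #|[pred L : {ffun 'I_k * 'I_n -> 'I_n} | reduced_latin_rect L]|.

Definition g (t00 t10 t01 t11 : int) : int := (t00 + t10) * (t00 + t01) - t00.

(* Main.v *)
Require Import Defs.
From mathcomp Require Import all_boot all_order all_algebra zify ring.
Import GRing.Theory Num.Theory.
Set Implicit Arguments. Unset Strict Implicit. Unset Printing Implicit Defensive.
Definition cnt (T : finType) m (c : {ffun 'I_m -> T}) (t : T) : nat :=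
  \sum_(i < m) (c i == t).
Definition Nc (T : finType) m (s : T -> nat) : nat :=
  \sum_(c : {ffun 'I_m -> T}) [forall t, cnt c t == s t].

Lemma cnt_sum (T : finType) m (c : {ffun 'I_m -> T}) : \sum_t cnt c t = m.
Proof.
rewrite /cnt exchange_big /= -[m in RHS]card_ord -sum1_card.
apply: eq_bigr => i _; rewrite (bigD1 (c i)) //= eqxx big1 ?addn0 // => t.
by rewrite eq_sym => /negPf ->.
Qed.

Lemma Nc_rec (T : finType) m s : Nc m.+1 s =
  \sum_(x : T) (if 0 < s x then Nc m (fun t => s t - (x == t)) else 0).
Proof.
rewrite /Nc (reindex (fun p : T * {ffun 'I_m -> T} =>
   [ffun i : 'I_m.+1 => if unlift ord0 i is Some j then p.2 j else p.1])); last first.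
  exists (fun c : {ffun 'I_m.+1 -> T} => (c ord0, [ffun j => c (lift ord0 j)])).
    move=> [x c'] _ /=; rewrite ffunE unlift_none; congr pair.
    by apply/ffunP => j; rewrite !ffunE liftK.
  move=> c _; apply/ffunP => i; rewrite ffunE /=.
  by case: unliftP => [j ->|->]; rewrite ?ffunE.
pose mk x (c' : {ffun 'I_m -> T}) := [ffun i : 'I_m.+1 => if unlift ord0 i is Some j then c' j else x].
transitivity (\sum_(x : T) \sum_(c' : {ffun 'I_m -> T}) [forall t, cnt (mk x c') t == s t]); first by rewrite pair_bigA.
apply: eq_bigr => x _.
have Ecnt c' t : cnt (mk x c') t
    = (x == t) + cnt c' t.
  rewrite /cnt big_ord_recl ffunE unlift_none; congr addn.
  by apply: eq_bigr => j _; rewrite ffunE liftK.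
case: ifP => sx.
  apply: eq_bigr => c' _; congr (nat_of_bool _); apply: eq_forallb => t; rewrite Ecnt.
  case: (x =P t) => [<-|_]; last by rewrite /= add0n subn0.
  by apply/eqP/eqP; lia.
apply: big1 => c' _; case: forallP => // /(_ x); rewrite Ecnt eqxx.
by move/eqP; lia.
Qed.

Lemma Nc_fact (T : finType) m (s : T -> nat) :
  \sum_t s t = m -> Nc m s * \prod_t (s t)`! = m`!.
Proof.
elim: m s => [|m IH] s Hs.
  have s0 t : s t = 0.
    by move/eqP: Hs; rewrite sum_nat_eq0 => /forallP /(_ t) /eqP.
  rewrite big1 ?muln1; last by move=> t _; rewrite s0.
  rewrite /Nc (eq_bigr (fun _ => 1)); last first.
    move=> c _; have H : [forall t, cnt c t == s t] by apply/forallP => t; rewrite s0 /cnt big_ord0.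
    by rewrite H.
  by rewrite sum1_card card_ffun card_ord expn0.
rewrite Nc_rec big_distrl /=.
rewrite (eq_bigr (fun x => s x * m`!)); last first.
  move=> x _; case: ifP => sx; last by move/negbT: sx; rewrite -leqNgt leqn0 => /eqP ->.
  pose s' t := s t - (x == t).
  have Hs' : \sum_t s' t = m.
    have: \sum_t s' t + 1 = \sum_t s t.
      rewrite (bigD1 x) //= [in RHS](bigD1 x) //= /s' eqxx.
      rewrite (eq_bigr (fun t => s t)); last by move=> t; rewrite eq_sym => /negPf ->; rewrite subn0.
      lia.
    lia.
  have -> : \prod_t (s t)`! = s x * \prod_t (s' t)`!.
    rewrite (bigD1 x) //= [in RHS](bigD1 x) //= /s' eqxx.
    rewrite [in RHS](eq_bigr (fun t => (s t)`!)); last by move=> t; rewrite eq_sym => /negPf ->; rewrite subn0.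
    rewrite mulnA; congr muln.
    by case: (s x) sx => // k _; rewrite factS subSS subn0.
  by rewrite mulnCA IH.
by rewrite -big_distrl /= Hs factS.
Qed.

Lemma Nc_div (T : finType) m (s : T -> nat) :
  \sum_t s t = m -> Nc m s = m`! %/ \prod_t (s t)`!.
Proof.
move=> Hs; rewrite -(Nc_fact Hs) mulnK //.
by apply: prodn_gt0 => t; apply: fact_gt0.
Qed.
Definition i0 : 'I_3 := @Ordinal 3 0 isT.
Definition i1 : 'I_3 := @Ordinal 3 1 isT.
Definition i2 : 'I_3 := @Ordinal 3 2 isT.

Lemma ord3P (i : 'I_3) : [\/ i = i0, i = i1 | i = i2].
Proof.
case: i => [[|[|[|k]]] Hi].
- by apply: Or31; apply: val_inj.
- by apply: Or32; apply: val_inj.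
- by apply: Or33; apply: val_inj.
- by [].
Qed.

Definition validr n (r : {ffun 'I_n -> 'I_n * 'I_n}) : bool :=
  [&& injectiveb (fun j => (r j).1), injectiveb (fun j => (r j).2) &
  [forall j, [&& (r j).1 != j, (r j).2 != j & (r j).1 != (r j).2]]].

Definition toL n (r : {ffun 'I_n -> 'I_n * 'I_n}) : {ffun 'I_3 * 'I_n -> 'I_n} :=
  [ffun ij : 'I_3 * 'I_n => if val ij.1 == 0%N then ij.2
                            else if val ij.1 == 1%N then (r ij.2).1 else (r ij.2).2].
Definition ofL n (L : {ffun 'I_3 * 'I_n -> 'I_n}) : {ffun 'I_n -> 'I_n * 'I_n} :=
  [ffun j => (L (i1, j), L (i2, j))].

Lemma toL0 n r j : @toL n r (i0, j) = j. Proof. by rewrite ffunE. Qed.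
Lemma toL1 n r j : @toL n r (i1, j) = (r j).1. Proof. by rewrite ffunE. Qed.
Lemma toL2 n r j : @toL n r (i2, j) = (r j).2. Proof. by rewrite ffunE. Qed.

Lemma toL_inj n : injective (@toL n).
Proof.
move=> r1 r2 E; apply/ffunP => j.
have E1 := congr1 (fun L : {ffun _ -> _} => L (i1, j)) E; have E2 := congr1 (fun L : {ffun _ -> _} => L (i2, j)) E.
rewrite /= !toL1 in E1; rewrite /= !toL2 in E2.
by case: (r1 j) (r2 j) E1 E2 => a b [c d] /= -> ->.
Qed.

Lemma toL_red n r : validr r -> reduced_latin_rect (@toL n r).
Proof.
case/and3P => /injectiveP inj1 /injectiveP inj2 /forallP loc.
apply/andP; split; last first.
  apply/forallP => i; apply/forallP => j; apply/implyP.
  by case: (ord3P i) => ->; rewrite ?toL0 ?toL1 ?toL2.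
apply/andP; split.
  apply/forallP => i; apply/forallP => j1; apply/forallP => j2; apply/implyP.
  case: (ord3P i) => ->; rewrite ?toL0 ?toL1 ?toL2 => /eqP E; apply/eqP => //.
  - exact: inj1.
  - exact: inj2.
apply/forallP => j; apply/forallP => a; apply/forallP => b; apply/implyP.
have /and3P [h1 h2 h3] := loc j.
case: (ord3P a) => ->; case: (ord3P b) => ->; rewrite ?toL0 ?toL1 ?toL2 //;
  rewrite ?(negPf h1) ?(negPf h2) ?(negPf h3) //;
  rewrite eq_sym ?(negPf h1) ?(negPf h2) ?(negPf h3) //.
Qed.

Lemma red_ofL n L : reduced_latin_rect L -> validr (@ofL n L) /\ toL (ofL L) = L.
Proof.
case/andP => /andP [/forallP rows /forallP cols] /forallP red.
have L0 j : L (i0, j) = j by apply: val_inj; move: (red i0) => /forallP /(_ j) /implyP /(_ isT) /eqP.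
have cl j a b : a != b -> L (a, j) != L (b, j).
  by move=> nab; apply/negP => E; move: (cols j) => /forallP /(_ a) /forallP /(_ b) /implyP /(_ E); rewrite (negPf nab).
have rl i a b : L (i, a) = L (i, b) -> a = b.
  by move=> E; move: (rows i) => /forallP /(_ a) /forallP /(_ b) /implyP; rewrite E eqxx => /(_ isT) /eqP.
split.
  apply/and3P; split.
  - by apply/injectiveP => a b; rewrite !ffunE /=; apply: rl.
  - by apply/injectiveP => a b; rewrite !ffunE /=; apply: rl.
  apply/forallP => j; rewrite !ffunE /=.
  rewrite -{2}(L0 j) -{4}(L0 j) !cl //.
apply/ffunP => [[i j]]; case: (ord3P i) => ->; rewrite ?toL0 ?toL1 ?toL2 ?ffunE //.
Qed.

Lemma R3_valid n : R 3 n = #|[pred r : {ffun 'I_n -> 'I_n * 'I_n} | validr r]|.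
Proof.
rewrite /R.
have E : [pred L : {ffun 'I_3 * 'I_n -> 'I_n} | reduced_latin_rect L]
          =i (@toL n) @: [set r | validr r].
  move=> L; rewrite inE /=; apply/idP/imsetP.
    by move=> /red_ofL [v e]; exists (ofL L); rewrite ?inE.
  by move=> [r]; rewrite inE => /toL_red H ->.
rewrite (eq_card E) card_imset; last exact: (@toL_inj n).
by apply: eq_card => r; rewrite inE.
Qed.
Local Open Scope ring_scope.

Definition ind (b : bool) : int := (nat_of_bool b)%:R.

Lemma ind_and a b : ind (a && b) = ind a * ind b.
Proof. by case: a; case: b; rewrite /ind /= ?mulr1 ?mulr0 ?mul0r. Qed.

Lemma prod_ind (I : finType) (P : pred I) :
  \prod_(i : I) ind (P i) = ind [forall i, P i].
Proof.
case: forallP => [H|/forallP]; first by rewrite big1 // => i _; rewrite H.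
rewrite negb_forall => /existsP [i Hi].
by rewrite (bigD1 i) //= /ind (negPf Hi) mul0r.
Qed.

Lemma inj_surj n (f : 'I_n -> 'I_n) :
  injectiveb f = [forall y, [exists j, f j == y]].
Proof.
apply/injectiveP/forallP => [inj y|H].
  by have /codomP [x ->] := injF_onto inj y; apply/existsP; exists x.
suff /image_injP inj : #|image f 'I_n| == #|'I_n| by move=> x y; apply: inj.
rewrite (@eq_card _ _ predT) // => y.
have /existsP [x /eqP <-] := H y.
by rewrite image_f.
Qed.

Lemma sum_bb (F : bool * bool -> int) :
  \sum_t F t = F (false, false) + F (true, false) + F (false, true) + F (true, true).
Proof.
rewrite (_ : \sum_t F t = \sum_a \sum_b F (a, b)); last first.
  by rewrite pair_bigA; apply: eq_bigr => -[a b].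
by rewrite !big_bool /=; ring.
Qed.

Lemma prod_bb (F : bool * bool -> int) :
  \prod_t F t = F (false, false) * F (true, false) * F (false, true) * F (true, true).
Proof.
rewrite (_ : \prod_t F t = \prod_a \prod_b F (a, b)); last first.
  by rewrite pair_bigA; apply: eq_bigr => -[a b].
by rewrite !big_bool /=; ring.
Qed.

Lemma sumn_bb (F : bool * bool -> nat) :
  (\sum_t F t = F (false, false) + F (true, false) + F (false, true) + F (true, true))%N.
Proof.
rewrite (_ : (\sum_t F t = \sum_a \sum_b F (a, b))%N); last first.
  by rewrite pair_bigA; apply: eq_bigr => -[a b].
by rewrite !big_bool /=; lia.
Qed.

Lemma prodn_bb (F : bool * bool -> nat) :
  (\prod_t F t = F (false, false) * F (true, false) * F (false, true) * F (true, true))%N.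
Proof.
rewrite (_ : (\prod_t F t = \prod_a \prod_b F (a, b))%N); last first.
  by rewrite pair_bigA; apply: eq_bigr => -[a b].
by rewrite !big_bool /=; lia.
Qed.

Lemma forall_bb (P : pred (bool * bool)) :
  [forall t, P t] = [&& P (false, false), P (true, false), P (false, true) & P (true, true)].
Proof.
apply/forallP/and4P => [H|[H1 H2 H3 H4] [[] []]] //; by split; apply: H.
Qed.

Lemma ind2 a b : ind a * ind b =
  \sum_(t : bool * bool) (-1) ^+ (t.1 + t.2)%N * ind (t.1 ==> ~~ a) * ind (t.2 ==> ~~ b).
Proof. by rewrite sum_bb; case: a; case: b; rewrite /ind /=; ring. Qed.

Definition im1 n (r : {ffun 'I_n -> 'I_n * 'I_n}) y := [exists j, (r j).1 == y].
Definition im2 n (r : {ffun 'I_n -> 'I_n * 'I_n}) y := [exists j, (r j).2 == y].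
Definition locr n (r : {ffun 'I_n -> 'I_n * 'I_n}) :=
  [forall j, [&& (r j).1 != j, (r j).2 != j & (r j).1 != (r j).2]].
Definition W n (r : {ffun 'I_n -> 'I_n * 'I_n}) y (t : bool * bool) :=
  (-1) ^+ (t.1 + t.2)%N * ind (t.1 ==> ~~ im1 r y) * ind (t.2 ==> ~~ im2 r y).

Lemma valid_ind n (r : {ffun 'I_n -> 'I_n * 'I_n}) :
  ind (validr r) = ind (locr r) * \prod_y (ind (im1 r y) * ind (im2 r y)).
Proof.
rewrite /validr !inj_surj big_split /= !prod_ind -!ind_and; congr ind.
by apply/and3P/andP => [[x y z]|[z /andP[x y]]]; [split; try apply/andP|].
Qed.

Lemma step1 n : (#|[pred r : {ffun 'I_n -> 'I_n * 'I_n} | validr r]|)%:R =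
  \sum_(c : {ffun 'I_n -> bool * bool}) \sum_(r : {ffun 'I_n -> 'I_n * 'I_n})
     ind (locr r) * \prod_y W r y (c y) :> int.
Proof.
rewrite -sum1_card natr_sum big_mkcond /=.
rewrite (eq_bigr (fun r => ind (locr r) * \sum_(c : {ffun 'I_n -> bool * bool}) \prod_y W r y (c y))); last first.
  move=> r _; rewrite inE (_ : (if validr r then 1 else 0) = ind (validr r)); last by case: (validr r).
  rewrite valid_ind; congr (_ * _).
  by rewrite -bigA_distr_bigA; apply: eq_bigr => y _; rewrite ind2.
under eq_bigr do rewrite mulr_sumr.
exact: exchange_big.
Qed.

Definition sgn n (c : {ffun 'I_n -> bool * bool}) : int :=
  \prod_y (-1) ^+ ((c y).1 + (c y).2)%N.
Definition K n (c : {ffun 'I_n -> bool * bool}) (j : 'I_n) (p : 'I_n * 'I_n) :=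
  [&& p.1 != j, p.2 != j, p.1 != p.2, ~~ (c p.1).1 & ~~ (c p.2).2].

Lemma step2 n (c : {ffun 'I_n -> bool * bool}) :
  \sum_(r : {ffun 'I_n -> 'I_n * 'I_n}) ind (locr r) * \prod_y W r y (c y) =
  sgn c * \prod_j \sum_p ind (K c j p).
Proof.
rewrite bigA_distr_bigA mulr_sumr; apply: eq_bigr => r _.
rewrite /W !big_split /= !prod_ind -/(sgn c) [LHS]mulrC -!mulrA; congr (_ * _).
rewrite -!ind_and; congr ind.
apply/and3P/forallP => [[/forallP H1 /forallP H2 /forallP H3] j|H].
  have /and3P [a1 a2 a3] := H3 j.
  rewrite /K a1 a2 a3 /=; apply/andP; split; apply/negP => Hc.
    by move/implyP: (H1 (r j).1) => /(_ Hc) /existsP; apply; exists j.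
  by move/implyP: (H2 (r j).2) => /(_ Hc) /existsP; apply; exists j.
split; last by apply/forallP => j; case/and5P: (H j) => a1 a2 a3 _ _; apply/and3P.
  apply/forallP => y; apply/implyP => Hc; apply/negP => /existsP [j /eqP Ej].
  by case/and5P: (H j); rewrite Ej Hc.
apply/forallP => y; apply/implyP => Hc; apply/negP => /existsP [j /eqP Ej].
by case/and5P: (H j); rewrite Ej Hc.
Qed.

Definition S n (c : {ffun 'I_n -> bool * bool}) t : int := (cnt c t)%:R.

Lemma S_sum n (c : {ffun 'I_n -> bool * bool}) t : S c t = \sum_a ind (c a == t).
Proof. by rewrite /S /cnt natr_sum. Qed.

Lemma sum_minus n (j : 'I_n) (P : pred 'I_n) :
  \sum_a ind ((a != j) && P a) = \sum_a ind (P a) - ind (P j).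
Proof.
rewrite (bigD1 j) //= [in RHS](bigD1 j) //= eqxx /=.
rewrite (eq_bigr (fun a => ind (P a))); last by move=> a /negPf; rewrite eq_sym => ->.
rewrite /ind /=; ring.
Qed.

Lemma sum_diag n (F : 'I_n -> int) (a : 'I_n) : \sum_b F b * ind (a == b) = F a.
Proof.
rewrite (bigD1 a) //= eqxx big1 => [|b nb]; first by rewrite /ind /= mulr1 addr0.
by rewrite eq_sym (negPf nb) /ind mulr0.
Qed.

Lemma step4 n (c : {ffun 'I_n -> bool * bool}) (j : 'I_n) :
  \sum_p ind (K c j p) =
  ((S c (false, false) + S c (false, true)) - ind (~~ (c j).1)) *
  ((S c (false, false) + S c (true, false)) - ind (~~ (c j).2)) -
  (S c (false, false) - ind (c j == (false, false))).
Proof.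
pose A a := (a != j) && ~~ (c a).1.
pose B b := (b != j) && ~~ (c b).2.
transitivity (\sum_a \sum_b (ind (A a) * ind (B b) - ind (A a) * ind (B b) * ind (a == b))).
  rewrite pair_bigA; apply: eq_bigr => -[a b] _ /=.
  rewrite /K /A /B /=.
  by case: (a == j); case: (b == j); case: (a == b); case: ((c a).1); case: ((c b).2);
    rewrite /ind /= ?mulr0 ?mulr1 ?subr0 ?subrr.
rewrite (eq_bigr (fun a => ind (A a) * \sum_b ind (B b) - ind (A a) * ind (B a))); last first.
  move=> a _; rewrite sumrB mulr_sumr; congr (_ - _).
  by rewrite (sum_diag (fun b => ind (A a) * ind (B b))).
rewrite sumrB -mulr_suml.
have SX : \sum_a ind (~~ (c a).1) = S c (false, false) + S c (false, true).
  rewrite !S_sum -big_split; apply: eq_bigr => a _.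
  by case: (c a) => -[] []; rewrite /ind /= ?addr0 ?add0r.
have SY : \sum_a ind (~~ (c a).2) = S c (false, false) + S c (true, false).
  rewrite !S_sum -big_split; apply: eq_bigr => a _.
  by case: (c a) => -[] []; rewrite /ind /= ?addr0 ?add0r.
rewrite /A /B !sum_minus SX SY; congr (_ - _).
rewrite (eq_bigr (fun a => ind ((a != j) && (c a == (false, false))))); last first.
  move=> a _; case: (a == j); case: (c a) => -[] []; by rewrite /ind /= ?mulr0 ?mul0r ?mulr1.
by rewrite sum_minus S_sum.
Qed.

Definition Phi (a b c d : nat) : int :=
  (-1) ^+ (b + c + 2 * d)%N
  * g (a%:Z - 1) b%:Z c%:Z (d%:Z + 1) ^+ a
  * g a%:Z (b%:Z - 1) c%:Z (d%:Z + 1) ^+ b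
  * g a%:Z b%:Z (c%:Z - 1) (d%:Z + 1) ^+ c
  * g a%:Z b%:Z c%:Z d%:Z ^+ d.

Lemma prod_type (T : finType) m (c : {ffun 'I_m -> T}) (F : T -> int) :
  \prod_j F (c j) = \prod_t F t ^+ cnt c t.
Proof.
transitivity (\prod_j \prod_t F t ^+ (c j == t)).
  apply: eq_bigr => j _; rewrite (bigD1 (c j)) //= eqxx expr1 big1 ?mulr1 // => t.
  by rewrite eq_sym => /negPf ->; rewrite expr0.
rewrite exchange_big; apply: eq_bigr => t _; rewrite /cnt.
by rewrite (big_morph _ (exprD (F t)) (expr0 (F t))).
Qed.

Lemma step5 n (c : {ffun 'I_n -> bool * bool}) :
  sgn c * \prod_j (((S c (false, false) + S c (false, true)) - ind (~~ (c j).1)) *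
  ((S c (false, false) + S c (true, false)) - ind (~~ (c j).2)) -
  (S c (false, false) - ind (c j == (false, false))))
  = Phi (cnt c (false, false)) (cnt c (true, false)) (cnt c (false, true)) (cnt c (true, true)).
Proof.
pose G t := match t with
  | (false, false) => g (S c (false, false) - 1) (S c (true, false)) (S c (false, true)) (S c (true, true) + 1)
  | (true, false) => g (S c (false, false)) (S c (true, false) - 1) (S c (false, true)) (S c (true, true) + 1)
  | (false, true) => g (S c (false, false)) (S c (true, false)) (S c (false, true) - 1) (S c (true, true) + 1)
  | (true, true) => g (S c (false, false)) (S c (true, false)) (S c (false, true)) (S c (true, true))
  end.
rewrite (eq_bigr (fun j => G (c j))); last first.
  by move=> j _; case: (c j) => -[] []; rewrite /G /g /ind /=; ring.
rewrite prod_type /sgn (prod_type c (fun t => (-1) ^+ (t.1 + t.2)%N)) !prod_bb /G /Phi /S /=.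
rewrite !natz !expr0 !expr1n !mul1r -!exprM -!exprD !mulrA.
congr (_ * _ * _ * _ * _).
rewrite mulr1 [in RHS]exprD [(-1) ^+ (2 * _)]exprM sqrrN !expr1n mulr1; congr (_ ^+ _); lia.
Qed.

Lemma main_sum n : (R 3 n)%:Z =
  \sum_(c : {ffun 'I_n -> bool * bool})
     Phi (cnt c (false, false)) (cnt c (true, false)) (cnt c (false, true)) (cnt c (true, true)).
Proof.
rewrite R3_valid -natz step1; apply: eq_bigr => c _.
rewrite step2 (eq_bigr _ (fun j _ => step4 c j)).
exact: step5.
Qed.

Definition sf (a b c d : nat) (t : bool * bool) : nat :=
  match t with
  | (false, false) => a | (true, false) => b | (false, true) => c | (true, true) => d
  end.

Lemma Nc_val n a b c d : (Nc n (sf a b c d))%:Z =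
  if (a + b + c + d == n)%N then (n`! %/ (a`! * b`! * c`! * d`!))%:Z else 0.
Proof.
have Hs : (\sum_t sf a b c d t = a + b + c + d)%N by rewrite sumn_bb.
case: ifP => H.
  rewrite (@Nc_div _ n (sf a b c d)); last by rewrite Hs; apply/eqP.
  by rewrite prodn_bb.
rewrite /Nc big1 // => f _; case: forallP => // Hf.
move: (cnt_sum f); rewrite (eq_bigr _ (fun t _ => eqP (Hf t))) Hs => E.
by rewrite E eqxx in H.
Qed.

Lemma pick n (k : nat) (F : nat -> int) : (k <= n)%N ->
  \sum_(s < n.+1) ind (k == s) * F s = F k.
Proof.
move=> Hk; have Hk' : (k < n.+1)%N by [].
rewrite (bigD1 (Ordinal Hk')) //= eqxx /ind /= mul1r big1 ?addr0 // => i ni.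
case: eqP => [E|_]; last by rewrite mul0r.
suff : i == Ordinal Hk' by rewrite (negPf ni).
by apply/eqP/val_inj; rewrite /= E.
Qed.

Lemma cnt_le (T : finType) m (c : {ffun 'I_m -> T}) t : (cnt c t <= m)%N.
Proof. by rewrite -{2}(cnt_sum c) (bigD1 t) //= leq_addr. Qed.

Definition Xf n (f : {ffun 'I_n -> bool * bool}) (a b c d : nat) : int :=
  ind [forall t, cnt f t == sf a b c d t] * Phi a b c d.

Lemma pickO n (k : nat) (F : 'I_n.+1 -> int) : (k <= n)%N ->
  \sum_(s < n.+1) ind (k == s) * F s = F (inord k).
Proof.
move=> Hk; rewrite (bigD1 (inord k)) //= inordK // eqxx /ind /= mul1r big1 ?addr0 // => i ni.
case: eqP => [E|_]; last by rewrite mul0r.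
suff : i == inord k by rewrite (negPf ni).
by apply/eqP/val_inj; rewrite /= inordK // E.
Qed.

Lemma per_f n (f : {ffun 'I_n -> bool * bool}) :
  \sum_(a < n.+1) \sum_(b < n.+1) \sum_(c < n.+1) \sum_(d < n.+1) Xf f a b c d =
  Phi (cnt f (false, false)) (cnt f (true, false)) (cnt f (false, true)) (cnt f (true, true)).
Proof.
transitivity (\sum_(a < n.+1) ind (cnt f (false, false) == a) *
   \sum_(b < n.+1) ind (cnt f (true, false) == b) *
   \sum_(c < n.+1) ind (cnt f (false, true) == c) *
   \sum_(d < n.+1) ind (cnt f (true, true) == d) * Phi a b c d).
  apply: eq_bigr => a _; rewrite mulr_sumr; apply: eq_bigr => b _.
  rewrite mulrA mulr_sumr; apply: eq_bigr => c _.
  rewrite mulrA mulr_sumr; apply: eq_bigr => d _.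
  rewrite /Xf forall_bb /= !ind_and; ring.
by rewrite pickO ?cnt_le // pickO ?cnt_le // pickO ?cnt_le // pickO ?cnt_le // !inordK // ltnS cnt_le.
Qed.

Lemma term_eq n (a b c d : nat) :
  (if (a + b + c + d == n)%N then
      (-1) ^+ (b + c + 2 * d)%N
      * ((n`! %/ (a`! * b`! * c`! * d`!))%N)%:Z
      * g (a%:Z - 1) b%:Z c%:Z (d%:Z + 1) ^+ a
      * g a%:Z (b%:Z - 1) c%:Z (d%:Z + 1) ^+ b
      * g a%:Z b%:Z (c%:Z - 1) (d%:Z + 1) ^+ c
      * g a%:Z b%:Z c%:Z d%:Z ^+ d
    else 0) = \sum_(f : {ffun 'I_n -> bool * bool}) Xf f a b c d.
Proof.
rewrite /Xf -mulr_suml.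
have -> : \sum_(f : {ffun 'I_n -> bool * bool}) ind [forall t, cnt f t == sf a b c d t]
   = (Nc n (sf a b c d))%:Z by rewrite -natz /Nc natr_sum.
by rewrite Nc_val; case: ifP => _; rewrite /Phi ?mul0r //; ring.
Qed.

Theorem mainTheorem1 (n : nat) (hn : (0 < n)%N) :
  (R 3 n)%:Z =
  \sum_(s00 < n.+1) \sum_(s10 < n.+1) \sum_(s01 < n.+1) \sum_(s11 < n.+1)
    if (s00 + s10 + s01 + s11 == n)%N then
      (-1) ^+ (s10 + s01 + 2 * s11)%N
      * ((n`! %/ (s00`! * s10`! * s01`! * s11`!))%N)%:Z
      * g (s00%:Z - 1) s10%:Z s01%:Z (s11%:Z + 1) ^+ s00
      * g s00%:Z (s10%:Z - 1) s01%:Z (s11%:Z + 1) ^+ s10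
      * g s00%:Z s10%:Z (s01%:Z - 1) (s11%:Z + 1) ^+ s01
      * g s00%:Z s10%:Z s01%:Z s11%:Z ^+ s11
    else 0.
Proof.
rewrite main_sum; symmetry.
transitivity (\sum_(a < n.+1) \sum_(b < n.+1) \sum_(c < n.+1) \sum_(d < n.+1)
   \sum_(f : {ffun 'I_n -> bool * bool}) Xf f a b c d).
  by do 4 (apply: eq_bigr => ? _); rewrite term_eq.
transitivity (\sum_(a < n.+1) \sum_(b < n.+1) \sum_(c < n.+1)
   \sum_(f : {ffun 'I_n -> bool * bool}) \sum_(d < n.+1) Xf f a b c d).
  by do 3 (apply: eq_bigr => ? _); exact: exchange_big.
transitivity (\sum_(a < n.+1) \sum_(b < n.+1)
   \sum_(f : {ffun 'I_n -> bool * bool}) \sum_(c < n.+1) \sum_(d < n.+1) Xf f a b c d).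
  by do 2 (apply: eq_bigr => ? _); exact: exchange_big.
transitivity (\sum_(a < n.+1)
   \sum_(f : {ffun 'I_n -> bool * bool}) \sum_(b < n.+1) \sum_(c < n.+1) \sum_(d < n.+1) Xf f a b c d).
  by apply: eq_bigr => ? _; exact: exchange_big.
rewrite exchange_big; apply: eq_bigr => f _; exact: per_f.
Qed.
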